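(* Let $\{\boldsymbol{Y}_n\}=\{(X_{1,n},X_{2,n},J_n)\}$ be a two-dimensional skip-free Markov modulated random walk as described in the context, which is irreducible and aperiodic. If $a_1<0$ or $a_2<0$, then for every $\boldsymbol{y}\in\mathbb{S}_+$ the occupation measure $(\tilde q_{\boldsymbol{y},\boldsymbol{y}'};\boldsymbol{y}'\in\mathbb{S}_+)$ is finite, i.e. $$\sum_{\boldsymbol{y}'\in\mathbb{S}_+}\tilde q_{\boldsymbol{y},\boldsymbol{y}'}=\mathbb{E}(\tau\mid \boldsymbol{Y}_0=\boldsymbol{y})<\infty .$$
   Context: Let $S_0=\{1,\dots,s_0\}$ be a finite set. The process $\{\boldsymbol{Y}_n\}=\{(X_{1,n},X_{2,n},J_n)\}$ is a discrete-time Markov chain on $\mathbb{S}=\mathbb{Z}^2\times S_0$ with space-homogeneous skip-free transitions: there are nonnegative $s_0\times s_0$ matrices $A_{k,l}$, $k,l\in\{-1,0,1\}$, with $\sum_{k,l}A_{k,l}$ stochastic, such that $\mathbb{P}(\boldsymbol{Y}_{n+1}=(x_1+k,x_2+l,j')\mid\boldsymbol{Y}_n=(x_1,x_2,j))=[A_{k,l}]_{j,j'}$ for all $(x_1,x_2)\in\mathbb{Z}^2$, $k,l\in\{-1,0,1\}$, $j,j'\in S_0$ (all other transitions have probability $0$). Let $\mathbb{Z}_+$ be the nonnegative integers, $\mathbb{S}_+=\mathbb{Z}_+^2\times S_0$, $\tau=\inf\{n\ge 0:\boldsymbol{Y}_n\in\mathbb{S}\setminus\mathbb{S}_+\}$,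 and for $\boldsymbol{y},\boldsymbol{y}'\in\mathbb{S}_+$, $\tilde q_{\boldsymbol{y},\boldsymbol{y}'}=\mathbb{E}\big(\sum_{n=0}^{\tau-1}1(\boldsymbol{Y}_n=\boldsymbol{y}')\mid\boldsymbol{Y}_0=\boldsymbol{y}\big)$. Let $A_{*,*}=\sum_{k,l}A_{k,l}$ (the transition matrix of the background process), $\boldsymbol{\pi}_{*,*}$ its stationary distribution, $A_{i,*}=\sum_{k}A_{i,k}$, $A_{*,j}=\sum_k A_{k,j}$, and define $a_1=\boldsymbol{\pi}_{*,*}(-A_{-1,*}+A_{1,*})\mathbf{1}$, $a_2=\boldsymbol{\pi}_{*,*}(-A_{*,-1}+A_{*,1})\mathbf{1}$, where $\mathbf 1$ is the all-ones column vector. *)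

(* Defs.v *)
From mathcomp Require Import all_boot all_order all_algebra.
From mathcomp Require Import all_classical all_reals all_analysis.
Set Implicit Arguments. Unset Strict Implicit. Unset Printing Implicit Defensive.
Import Order.TTheory GRing.Theory Num.Theory.
Local Open Scope ring_scope.

Definition state (s0 : nat) := (int * int * 'I_s0)%type.

(* Index i : 'I_3 encodes the jump size i - 1 in {-1,0,1}. *)
Definition stp (i : 'I_3) : int := (i%:Z - 1)%R.
Definition im1 : 'I_3 := ord0.
Definition ip1 : 'I_3 := ord_max.

Definition inSp (s0 : nat) (y : state s0) : bool := (0 <= y.1.1) && (0 <= y.1.2).

(* A k l plays the role of A_{stp k, stp l}. *)

Fixpoint pn (R : realType) (s0 : nat) (A : 'I_3 -> 'I_3 -> 'M[R]_s0)
  (n : nat) (y y' : state s0) {struct n} : R :=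
  match n with
  | 0 => if y == y' then 1 else 0
  | m.+1 => \sum_(k : 'I_3) \sum_(l : 'I_3) \sum_(j : 'I_s0)
              A k l y.2 j * pn A m (y.1.1 + stp k, y.1.2 + stp l, j) y'
  end.

(* P(Y_n = y', n < tau | Y_0 = y) : probability of being at y' at time n
   without having left S_+ at times 0..n. *)
Fixpoint killed_pn (R : realType) (s0 : nat) (A : 'I_3 -> 'I_3 -> 'M[R]_s0)
  (n : nat) (y y' : state s0) {struct n} : R :=
  match n with
  | 0 => if inSp y && (y == y') then 1 else 0
  | m.+1 => if inSp y then
              \sum_(k : 'I_3) \sum_(l : 'I_3) \sum_(j : 'I_s0)
                A k l y.2 j * killed_pn A m (y.1.1 + stp k, y.1.2 + stp l, j) y'
            else 0
  end.

(* Occupation measure q~_{y,y'} = E(sum_{n<tau} 1(Y_n = y') | Y_0 = y)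
   = sum_n P(Y_n = y', n < tau | Y_0 = y), an extended nonnegative real. *)
Definition qtilde (R : realType) (s0 : nat) (A : 'I_3 -> 'I_3 -> 'M[R]_s0)
  (y y' : state s0) : \bar R :=
  (\sum_(0 <= n <oo) (killed_pn A n y y')%:E)%E.

Definition irreducible_mmrw (R : realType) (s0 : nat) (A : 'I_3 -> 'I_3 -> 'M[R]_s0) : Prop :=
  forall y y' : state s0, exists n, 0 < pn A n y y'.

Definition aperiodic_mmrw (R : realType) (s0 : nat) (A : 'I_3 -> 'I_3 -> 'M[R]_s0) : Prop :=
  forall (y : state s0) (d : nat),
    (forall n : nat, (0 < n)%N -> 0 < pn A n y y -> (d %| n)%N) -> d = 1%N.

Definition Astar (R : realType) (s0 : nat) (A : 'I_3 -> 'I_3 -> 'M[R]_s0) : 'M[R]_s0 :=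
  \sum_(k : 'I_3) \sum_(l : 'I_3) A k l.
Definition Arow (R : realType) (s0 : nat) (A : 'I_3 -> 'I_3 -> 'M[R]_s0) (i : 'I_3) : 'M[R]_s0 :=
  \sum_(l : 'I_3) A i l.
Definition Acol (R : realType) (s0 : nat) (A : 'I_3 -> 'I_3 -> 'M[R]_s0) (j : 'I_3) : 'M[R]_s0 :=
  \sum_(k : 'I_3) A k j.

Definition drift1 (R : realType) (s0 : nat) (A : 'I_3 -> 'I_3 -> 'M[R]_s0) (pi : 'rV[R]_s0) : R :=
  (pi *m (- Arow A im1 + Arow A ip1) *m (const_mx 1 : 'cV[R]_s0)) 0 0.
Definition drift2 (R : realType) (s0 : nat) (A : 'I_3 -> 'I_3 -> 'M[R]_s0) (pi : 'rV[R]_s0) : R :=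
  (pi *m (- Acol A im1 + Acol A ip1) *m (const_mx 1 : 'cV[R]_s0)) 0 0.

(* Main.v *)
Require Import Defs.
From mathcomp Require Import all_boot all_order all_algebra.
From mathcomp Require Import all_classical all_reals all_analysis.
From mathcomp Require Import ring lra zify.
Import Order.TTheory GRing.Theory Num.Theory.
Local Open Scope ring_scope.
Set Implicit Arguments. Unset Strict Implicit.

Lemma maxprin (R : realType) n (P : 'M[R]_n) :
 (forall i j, 0 <= P i j) -> (forall i, \sum_j P i j = 1) ->
 (forall S : {set 'I_n}, (forall i j, i \in S -> 0 < P i j -> j \in S) -> forall i j, i \in S -> j \in S) ->
 forall u : 'cV[R]_n, P *m u = u -> forall i j, u i 0 = u j 0.
Proof.
move=> P0 P1 irr u Pu i j.
have [m _ mmax] : exists2 m, true & forall k, u k 0 <= u m 0.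
  case: (@Order.TotalTheory.arg_maxP _ _ _ i xpredT (fun k => u k 0) isT) => m _ H.
  by exists m => // k; apply: H.
pose S := [set k | u k 0 == u m 0].
have cl : forall a b, a \in S -> 0 < P a b -> b \in S.
  move=> a b; rewrite !inE => /eqP ua Pab.
  have e : \sum_k P a k * (u m 0 - u k 0) = 0.
    under eq_bigr do rewrite mulrBr.
    rewrite sumrB -mulr_suml P1 mul1r.
    have := congr1 (fun M : 'cV_n => M a 0) Pu; rewrite mxE => ->.
    by rewrite ua subrr.
  have H : forall k, true -> 0 <= P a k * (u m 0 - u k 0).
    by move=> k _; rewrite mulr_ge0 // subr_ge0.
  move: e => /(psumr_eq0P H) /(_ b isT) /eqP.
  by rewrite mulf_eq0 (gt_eqF Pab) /= subr_eq0 eq_sym.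
have mS : m \in S by rewrite inE.
have := irr S cl m i mS; have := irr S cl m j mS.
by rewrite !inE => /eqP -> /eqP ->.
Qed.

Lemma poisson (R : realType) n (P : 'M[R]_n) (pi : 'rV[R]_n) (g : 'cV[R]_n) :
 (forall i j, 0 <= P i j) -> (forall i, \sum_j P i j = 1) ->
 (forall S : {set 'I_n}, (forall i j, i \in S -> 0 < P i j -> j \in S) -> forall i j, i \in S -> j \in S) ->
 pi != 0 -> pi *m P = pi -> pi *m g = 0 -> exists h : 'cV_n, (1%:M - P) *m h = g.
Proof.
case: n P pi g => [|n] P pi g P0 P1 irr pi0 piP pig.
  by move: pi0; rewrite thinmx0 eqxx.
pose B := (1%:M - P)^T.
have kerB : (kermx B <= (const_mx 1 : 'rV[R]_n.+1))%MS.
  apply/row_subP => k.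
  set r := row k (kermx B).
  have rB : r *m B = 0 by rewrite /r -row_mul mulmx_ker row0.
  have Pr : P *m r^T = r^T.
    have := congr1 trmx rB; rewrite trmx_mul /B trmxK trmx0 mulmxBl mul1mx.
    by move/eqP; rewrite subr_eq0 eq_sym => /eqP.
  apply/submxP; exists ((r 0 0)%:M).
  apply/rowP => j; rewrite mul_scalar_mx !mxE.
  have := maxprin P0 P1 irr Pr j 0; rewrite !mxE => ->; by rewrite ?mulr1.
have rkB : (n.+1 - \rank B <= 1)%N.
  by rewrite -mxrank_ker; apply: leq_trans (mxrankS kerB) (rank_leq_row _).
pose K := kermx pi^T.
have rkpi : \rank pi^T = 1%N.
  apply/eqP; rewrite eqn_leq rank_leq_col lt0n mxrank_eq0.
  by apply: contra pi0 => /eqP/(congr1 trmx); rewrite trmxK trmx0 => ->.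
have BK : (B <= K)%MS.
  apply/sub_kermxP; rewrite /B -trmx_mul mulmxBr mulmx1 piP subrr trmx0 //.
have rkK : \rank K = (n.+1 - 1)%N by rewrite mxrank_ker rkpi.
have KB : (K <= B)%MS.
  have eBK : (B == K)%MS.
    rewrite -(mxrank_leqif_eq BK).2 eqn_leq mxrankS // rkK.
    lia.
  by move/eqmxP: eBK => ->.
have gK : (g^T <= K)%MS by apply/sub_kermxP; rewrite -trmx_mul pig trmx0.
have /submxP [u gu] := submx_trans gK KB.
exists u^T; have := congr1 trmx gu; rewrite trmxK trmx_mul /B trmxK => <-; done.
Qed.

Definition nxt s0 (y : state s0) (k l : 'I_3) (j : 'I_s0) : state s0 :=
  (y.1.1 + stp k, y.1.2 + stp l, j).

Fixpoint surv (R : realType) s0 (A : 'I_3 -> 'I_3 -> 'M[R]_s0) (n : nat) (y : state s0) : R :=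
  if inSp y then
    match n with
    | 0 => 1
    | m.+1 => \sum_(k : 'I_3) \sum_(l : 'I_3) \sum_(j : 'I_s0) A k l y.2 j * surv A m (nxt y k l j)
    end
  else 0.

Fixpoint Vf (R : realType) s0 (A : 'I_3 -> 'I_3 -> 'M[R]_s0) (f : state s0 -> R) (n : nat) (y : state s0) : R :=
  match n with
  | 0 => f y
  | m.+1 => if inSp y then \sum_(k : 'I_3) \sum_(l : 'I_3) \sum_(j : 'I_s0) A k l y.2 j * Vf A f m (nxt y k l j)
            else f y
  end.

Lemma surv_out (R : realType) s0 (A : 'I_3 -> 'I_3 -> 'M[R]_s0) n y :
  inSp y = false -> surv A n y = 0.
Proof. by case: n => [|n] /= ->. Qed.

Lemma surv0 (R : realType) s0 (A : 'I_3 -> 'I_3 -> 'M[R]_s0) y :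
  inSp y -> surv A 0 y = 1.
Proof. by move=> /= ->. Qed.

Lemma survS (R : realType) s0 (A : 'I_3 -> 'I_3 -> 'M[R]_s0) n y :
  inSp y -> surv A n.+1 y = \sum_(k : 'I_3) \sum_(l : 'I_3) \sum_(j : 'I_s0) A k l y.2 j * surv A n (nxt y k l j).
Proof. by move=> /= ->. Qed.

Lemma AstarE (R : realType) s0 (A : 'I_3 -> 'I_3 -> 'M[R]_s0) i j :
  Astar A i j = \sum_k \sum_l A k l i j.
Proof. by rewrite /Astar summxE; apply: eq_bigr => k _; rewrite summxE. Qed.

Lemma sumA1 (R : realType) s0 (A : 'I_3 -> 'I_3 -> 'M[R]_s0) :
  (forall i : 'I_s0, \sum_(j : 'I_s0) Astar A i j = 1) ->
  forall i, \sum_(k : 'I_3) \sum_(l : 'I_3) \sum_(j : 'I_s0) A k l i j = 1.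
Proof.
move=> h i; rewrite -(h i).
have -> : \sum_(j < s0) Astar A i j = \sum_(j < s0) \sum_(k < 3) \sum_(l < 3) A k l i j.
  by apply: eq_bigr => j _; exact: AstarE.
rewrite [RHS]exchange_big; apply: eq_bigr => k _ /=.
by rewrite [RHS]exchange_big.
Qed.

Lemma Vf_eq (R : realType) s0 (A : 'I_3 -> 'I_3 -> 'M[R]_s0) (f : state s0 -> R) (a : R) :
  (forall y, inSp y -> \sum_(k : 'I_3) \sum_(l : 'I_3) \sum_(j : 'I_s0) A k l y.2 j * f (nxt y k l j) = f y + a) ->
  forall n y, Vf A f n y = f y + a * \sum_(m < n) surv A m y.
Proof.
move=> hf; elim=> [|n IH] y /=; first by rewrite big_ord0 mulr0 addr0.
case: ifP => Sy; last first.
  rewrite big1 ?mulr0 ?addr0 // => m _.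
  by rewrite surv_out.
under eq_bigr do under eq_bigr do under eq_bigr do rewrite IH mulrDr.
rewrite [in RHS]big_ord_recl surv0 //.
have -> : \sum_(i < n) surv A (lift ord0 i) y =
   \sum_(k : 'I_3) \sum_(l : 'I_3) \sum_(j : 'I_s0) A k l y.2 j * \sum_(m < n) surv A m (nxt y k l j).
  under eq_bigr do rewrite survS //.
  rewrite exchange_big; apply: eq_bigr => k _.
  rewrite exchange_big; apply: eq_bigr => l _.
  rewrite exchange_big; apply: eq_bigr => j _.
  by rewrite mulr_sumr.
have -> : forall F G : 'I_3 -> 'I_3 -> 'I_s0 -> R,
   \sum_(k : 'I_3) \sum_(l : 'I_3) \sum_(j : 'I_s0) (F k l j + G k l j) =
   \sum_(k : 'I_3) \sum_(l : 'I_3) \sum_(j : 'I_s0) F k l j + \sum_(k : 'I_3) \sum_(l : 'I_3) \sum_(j : 'I_s0) G k l j.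
  move=> F G; rewrite -big_split; apply: eq_bigr => k _.
  rewrite -big_split; apply: eq_bigr => l _.
  by rewrite -big_split.
rewrite hf //.
have -> : \sum_(k : 'I_3) \sum_(l : 'I_3) \sum_(j : 'I_s0) A k l y.2 j * (a * \sum_(m < n) surv A m (nxt y k l j)) =
   a * \sum_(k : 'I_3) \sum_(l : 'I_3) \sum_(j : 'I_s0) A k l y.2 j * \sum_(m < n) surv A m (nxt y k l j).
  rewrite mulr_sumr; apply: eq_bigr => k _.
  rewrite mulr_sumr; apply: eq_bigr => l _.
  rewrite mulr_sumr; apply: eq_bigr => j _.
  by rewrite mulrCA.
ring.
Qed.


Lemma Vf_out (R : realType) s0 (A : 'I_3 -> 'I_3 -> 'M[R]_s0) f n y :
  inSp y = false -> Vf A f n y = f y.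
Proof. by case: n => [|n] //= ->. Qed.

Lemma Vf_ge (R : realType) s0 (A : 'I_3 -> 'I_3 -> 'M[R]_s0) (f : state s0 -> R) (L : R) :
  (forall (k l : 'I_3) (i j : 'I_s0), 0 <= A k l i j) ->
  (forall i, \sum_(k : 'I_3) \sum_(l : 'I_3) \sum_(j : 'I_s0) A k l i j = 1) ->
  (forall y, inSp y -> L <= f y) ->
  (forall y k l j, inSp y -> L <= f (nxt y k l j)) ->
  forall n y, inSp y -> L <= Vf A f n y.
Proof.
move=> hA0 hA1 hL1 hL2; elim=> [|n IH] y Sy /=; first exact: hL1.
rewrite Sy -[L]mul1r -(hA1 y.2) mulr_suml; apply: ler_sum => k _.
rewrite mulr_suml; apply: ler_sum => l _.
rewrite mulr_suml; apply: ler_sum => j _.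
apply: ler_wpM2l => //.
case: (boolP (inSp (nxt y k l j))) => h; first exact: IH.
by rewrite Vf_out ?(negbTE h) //; apply: hL2.
Qed.

Lemma killed_ge0 (R : realType) s0 (A : 'I_3 -> 'I_3 -> 'M[R]_s0) :
  (forall (k l : 'I_3) (i j : 'I_s0), 0 <= A k l i j) ->
  forall n y y', 0 <= killed_pn A n y y'.
Proof.
move=> hA0; elim=> [|n IH] y y' /=; first by case: ifP.
case: ifP => // _; apply: sumr_ge0 => k _; apply: sumr_ge0 => l _; apply: sumr_ge0 => j _.
by apply: mulr_ge0.
Qed.

Lemma killed_le (R : realType) s0 (A : 'I_3 -> 'I_3 -> 'M[R]_s0) :
  (forall (k l : 'I_3) (i j : 'I_s0), 0 <= A k l i j) ->
  forall n y (s : seq (state s0)), uniq s -> \sum_(y' <- s) killed_pn A n y y' <= surv A n y.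
Proof.
move=> hA0; elim=> [|n IH] y s us /=.
  case: ifP => Sy /=; last by rewrite big1.
  rewrite -big_mkcond /= big_const_seq iter_addr addr0.
  rewrite (@eq_count _ _ (pred1 y)); last by move=> x; exact: eq_sym.
  rewrite count_uniq_mem //.
  by case: (y \in s).
case Sy: (inSp y) => /=; last by rewrite big1.
rewrite exchange_big; apply: ler_sum => k _.
rewrite exchange_big; apply: ler_sum => l _.
rewrite exchange_big; apply: ler_sum => j _.
by rewrite -mulr_sumr; apply: ler_wpM2l => //; apply: IH.
Qed.

Lemma sum3_swap (R : realType) s0 (F : 'I_3 -> 'I_3 -> 'I_s0 -> R) :
  \sum_(k : 'I_3) \sum_(l : 'I_3) \sum_(j : 'I_s0) F k l j = \sum_(j : 'I_s0) \sum_(k : 'I_3) \sum_(l : 'I_3) F k l j.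
Proof.
rewrite [RHS]exchange_big; apply: eq_bigr => k _ /=.
by rewrite [RHS]exchange_big.
Qed.

Lemma sum3_split (R : realType) s0 (F G : 'I_3 -> 'I_3 -> 'I_s0 -> R) :
   \sum_(k : 'I_3) \sum_(l : 'I_3) \sum_(j : 'I_s0) (F k l j + G k l j) =
   \sum_(k : 'I_3) \sum_(l : 'I_3) \sum_(j : 'I_s0) F k l j + \sum_(k : 'I_3) \sum_(l : 'I_3) \sum_(j : 'I_s0) G k l j.
Proof.
rewrite -big_split; apply: eq_bigr => k _.
rewrite -big_split; apply: eq_bigr => l _.
by rewrite -big_split.
Qed.

Lemma stp_ge (k : 'I_3) : -1 <= stp k.
Proof. rewrite /stp; lia. Qed.

Lemma case_bound (R : realType) s0 (A : 'I_3 -> 'I_3 -> 'M[R]_s0) (pi : 'rV[R]_s0)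
  (sg : 'I_3 -> 'I_3 -> 'I_3) (c : state s0 -> int) (D : 'M[R]_s0) :
  (forall (k l : 'I_3) (i j : 'I_s0), 0 <= A k l i j) ->
  (forall i : 'I_s0, \sum_(j : 'I_s0) Astar A i j = 1) ->
  (\sum_(j : 'I_s0) pi 0 j = 1) ->
  (pi *m Astar A = pi) ->
  (forall S : {set 'I_s0}, (forall i j, i \in S -> 0 < Astar A i j -> j \in S) -> forall i j, i \in S -> j \in S) ->
  (forall i j, D i j = \sum_(k : 'I_3) \sum_(l : 'I_3) (stp (sg k l))%:~R * A k l i j) ->
  (forall y k l j, c (nxt y k l j) = c y + stp (sg k l)) ->
  (forall y, inSp y -> 0 <= c y) ->
  (pi *m D *m (const_mx 1 : 'cV[R]_s0)) 0 0 < 0 ->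
  forall y, inSp y -> exists M : R, forall T, \sum_(m < T) surv A m y <= M.
Proof.
move=> hA0 hA1 hpi1 hpistat irr hD hc hc0 ha y Sy.
set a := (pi *m D *m (const_mx 1 : 'cV[R]_s0)) 0 0 in ha.
pose P := Astar A.
pose g : 'cV[R]_s0 := D *m (const_mx 1 : 'cV[R]_s0) - a *: const_mx 1.
have P0 : forall i j, 0 <= P i j.
  by move=> i j; rewrite /P AstarE; apply: sumr_ge0 => k _; apply: sumr_ge0 => l _.
have pi0 : pi != 0.
  apply/eqP => e; move: hpi1; rewrite e big1 => [/eqP|j _]; last by rewrite mxE.
  by rewrite eq_sym oner_eq0.
have pi1 : (pi *m (const_mx 1 : 'cV[R]_s0)) 0 0 = 1.
  by rewrite mxE; rewrite -[RHS]hpi1; apply: eq_bigr => j _; rewrite mxE mulr1.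
have pig : pi *m g = 0.
  apply/rowP => i; rewrite ord1 /g mulmxBr mulmxA -scalemxAr !mxE.
  have ea : a = \sum_j (pi *m D) 0 j * (const_mx 1 : 'cV[R]_s0) j 0 by rewrite /a mxE.
  by rewrite -ea; have := pi1; rewrite mxE => ->; rewrite mulr1 subrr.
have [h hh] := poisson P0 hA1 irr pi0 hpistat pig.
have hhi : forall i, h i 0 - \sum_j P i j * h j 0 = \sum_j D i j - a.
  move=> i; have := congr1 (fun M : 'cV_s0 => M i 0) hh.
  rewrite mulmxBl mul1mx /g !mxE => ->; rewrite mulr1; congr (_ - _).
  by apply: eq_bigr => j _; rewrite mxE mulr1.
pose f := fun z : state s0 => (c z)%:~R + h z.2 0.
have hf : forall z, inSp z -> \sum_(k : 'I_3) \sum_(l : 'I_3) \sum_(j : 'I_s0) A k l z.2 j * f (nxt z k l j) = f z + a.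
  move=> z _; rewrite /f.
  under eq_bigr do under eq_bigr do under eq_bigr do rewrite hc intrD /= !mulrDr.
  rewrite !sum3_split.
  have -> : \sum_(k : 'I_3) \sum_(l : 'I_3) \sum_(j : 'I_s0) A k l z.2 j * (c z)%:~R = (c z)%:~R.
    rewrite -[RHS]mul1r -(sumA1 hA1 z.2) !mulr_suml; apply: eq_bigr => k _.
    rewrite !mulr_suml; apply: eq_bigr => l _; rewrite !mulr_suml; apply: eq_bigr => j _.
    by rewrite mulrC.
  have -> : \sum_(k : 'I_3) \sum_(l : 'I_3) \sum_(j : 'I_s0) A k l z.2 j * (stp (sg k l))%:~R = \sum_j D z.2 j.
    rewrite sum3_swap; apply: eq_bigr => j _; rewrite hD; apply: eq_bigr => k _.
    by apply: eq_bigr => l _; rewrite mulrC.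
  have -> : \sum_(k : 'I_3) \sum_(l : 'I_3) \sum_(j : 'I_s0) A k l z.2 j * h j 0 = \sum_j P z.2 j * h j 0.
    rewrite sum3_swap; apply: eq_bigr => j _; rewrite /P AstarE !mulr_suml; apply: eq_bigr => k _.
    by rewrite !mulr_suml.
  have := hhi z.2; lra.
pose Lh := - \sum_j `|h j 0|.
have hLh : forall j, Lh <= h j 0.
  move=> j; rewrite /Lh lerNl; apply: le_trans (ler_norm _) _.
  rewrite normrN (bigD1 j) //= lerDl; exact: sumr_ge0.
pose L := Lh - 1.
have hL1 : forall z, inSp z -> L <= f z.
  move=> z Sz; rewrite /f /L; have := hLh z.2; have : 0 <= (c z)%:~R :> R by rewrite ler0z hc0.
  lra.
have hL2 : forall z k l j, inSp z -> L <= f (nxt z k l j).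
  move=> z k l j Sz; rewrite /f /L hc; have := hLh j.
  have : -1 <= (c z + stp (sg k l))%:~R :> R.
    have : -1 <= c z + stp (sg k l) by have := hc0 z Sz; have := stp_ge (sg k l); lia.
    by rewrite -(ler_int R).
  lra.
exists ((f y - L) / (- a)) => T.
have := Vf_ge hA0 (sumA1 hA1) hL1 hL2 T Sy; rewrite (Vf_eq hf).
rewrite ler_pdivlMr; last by rewrite oppr_gt0.
move=> H; nra.
Qed.


Lemma D1E (R : realType) s0 (A : 'I_3 -> 'I_3 -> 'M[R]_s0) i j :
  (- Arow A im1 + Arow A ip1) i j = \sum_(k : 'I_3) \sum_(l : 'I_3) (stp k)%:~R * A k l i j.
Proof.
have e2 : ip1 = lift ord0 (lift ord0 ord0) :> 'I_3 by apply: val_inj.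
have sa : (stp (ord0 : 'I_3))%:~R = -1 :> R by rewrite /stp sub0r mulrNz.
have sb : (stp (lift ord0 (ord0 : 'I_2)))%:~R = 0 :> R by rewrite /stp subrr.
have sc : (stp (lift ord0 (lift ord0 (ord0 : 'I_1))))%:~R = 1 :> R.
  by rewrite /stp /=.
rewrite !mxE /Arow !summxE !big_ord_recl !big_ord0 /= e2 /im1 sa sb sc.
lra.
Qed.

Lemma D2E (R : realType) s0 (A : 'I_3 -> 'I_3 -> 'M[R]_s0) i j :
  (- Acol A im1 + Acol A ip1) i j = \sum_(k : 'I_3) \sum_(l : 'I_3) (stp l)%:~R * A k l i j.
Proof.
have e2 : ip1 = lift ord0 (lift ord0 ord0) :> 'I_3 by apply: val_inj.
have sa : (stp (ord0 : 'I_3))%:~R = -1 :> R by rewrite /stp sub0r mulrNz.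
have sb : (stp (lift ord0 (ord0 : 'I_2)))%:~R = 0 :> R by rewrite /stp subrr.
have sc : (stp (lift ord0 (lift ord0 (ord0 : 'I_1))))%:~R = 1 :> R.
  by rewrite /stp /=.
rewrite !mxE /Acol !summxE !big_ord_recl !big_ord0 /= e2 /im1 sa sb sc.
lra.
Qed.

Lemma bg_irr (R : realType) s0 (A : 'I_3 -> 'I_3 -> 'M[R]_s0) :
  (forall (k l : 'I_3) (i j : 'I_s0), 0 <= A k l i j) ->
  irreducible_mmrw A ->
  forall S : {set 'I_s0}, (forall i j, i \in S -> 0 < Astar A i j -> j \in S) ->
  forall i j, i \in S -> j \in S.
Proof.
move=> hA0 hirr S cl i j iS; apply/negPn/negP => jS.
have zero : forall n (y y' : state s0), y.2 \in S -> y'.2 \notin S -> pn A n y y' = 0.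
  elim=> [|n IH] y y' yS y'S /=.
    by case: eqP => // e; move: y'S; rewrite -e yS.
  apply: big1 => k _; apply: big1 => l _; apply: big1 => j' _.
  case: (boolP (j' \in S)) => hj; first by rewrite IH ?mulr0.
  have : Astar A y.2 j' = 0.
    apply/eqP; rewrite eq_le; apply/andP; split.
      rewrite leNgt; apply/negP => /(cl _ _ yS); by rewrite (negbTE hj).
    by rewrite AstarE; apply: sumr_ge0 => k' _; apply: sumr_ge0.
  rewrite AstarE.
  have H1 : forall k' : 'I_3, true -> 0 <= \sum_(l' < 3) A k' l' y.2 j'.
    by move=> k' _; apply: sumr_ge0.
  move/(psumr_eq0P H1) => /(_ k isT).
  have H2 : forall l' : 'I_3, true -> 0 <= A k l' y.2 j' by [].
  by move/(psumr_eq0P H2) => /(_ l isT) ->; rewrite mul0r.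
have [n hn] := hirr ((0:int), (0:int), i) ((0:int), (0:int), j).
by move: hn; rewrite zero // ltxx.
Qed.

Unset Implicit Arguments.

Theorem proposition2p1 (R : realType) (s0 : nat) (A : 'I_3 -> 'I_3 -> 'M[R]_s0)
  (pi : 'rV[R]_s0)
  (hA0 : forall (k l : 'I_3) (i j : 'I_s0), 0 <= A k l i j)
  (hA1 : forall i : 'I_s0, \sum_(j : 'I_s0) Astar A i j = 1)
  (hpi0 : forall j : 'I_s0, 0 <= pi 0 j)
  (hpi1 : \sum_(j : 'I_s0) pi 0 j = 1)
  (hpistat : pi *m Astar A = pi)
  (hirr : irreducible_mmrw A)
  (haper : aperiodic_mmrw A)
  (hdrift : drift1 A pi < 0 \/ drift2 A pi < 0) :
  forall y : state s0, inSp y ->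
    (\esum_(y' in [set y' : state s0 | inSp y']) qtilde A y y' < +oo)%E.
Proof.
move=> y Sy.
have irr := bg_irr hA0 hirr.
have [M hM] : exists M : R, forall T, \sum_(m < T) surv A m y <= M.
  case: hdrift => hd.
    apply: (case_bound (pi := pi) (sg := fun k l => k) (c := fun z => z.1.1) (D := - Arow A im1 + Arow A ip1)) => //.
    - by move=> i j; rewrite D1E.
    - by move=> z /andP[].
  apply: (case_bound (pi := pi) (sg := fun k l => l) (c := fun z => z.1.2) (D := - Acol A im1 + Acol A ip1)) => //.
  - by move=> i j; rewrite D2E.
  - by move=> z /andP[].
apply: (le_lt_trans _ (ltry M)).
apply: ge_ereal_sup => _ [X [finX XS] <-].
rewrite fsbig_finite //= /qtilde -nneseries_sum; last first.
  by move=> i j _; rewrite lee_fin; apply: killed_ge0.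
apply: lime_le.
  by apply: is_cvg_nneseries => n _ _; apply: sume_ge0 => i _; rewrite lee_fin killed_ge0.
apply: nearW => T.
under eq_bigr do rewrite sumEFin.
rewrite sumEFin lee_fin big_mkord.
apply: le_trans (hM T); apply: ler_sum => n _.

apply: killed_le => //; exact: finmap.fset_uniq.
Qed.
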